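(* For $n,m\in\mathbb{N}_0$, $$\int_0^\pi x^n\sin^{2m}(x)\,dx=\frac{\pi^n}{4^m}\Bigg(\frac{\pi\binom{2m}{m}}{n+1}-n!\sum_{j=1}^{\lfloor n/2\rfloor}\frac{(-1)^j}{(2\pi)^{2j-1}(n+1-2j)!}\sum_{k=1}^{\infty}\frac{(-1)^k}{k^{2j}}\binom{2m}{m+k}\Bigg).$$
   Context: $\binom{2m}{m+k}=0$ for integers $k>m$. An empty sum is $0$. *)

(* Defs.v *)
From Stdlib Require Import Reals Arith Factorial Binomial.
From Coquelicot Require Import Coquelicot.
Open Scope R_scope.

(* Real-valued binomial coefficient with the paper's convention
   binom n k = 0 when k > n (Stdlib's [C n k] does not satisfy this). *)
Definition binom (n k : nat) : R := if Nat.leb k n then Binomial.C n k else 0.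

(* Main.v *)
Require Import Defs.
From Stdlib Require Import Reals Arith Factorial Binomial Lia Lra.
From Coquelicot Require Import Coquelicot.
Open Scope R_scope.
Lemma sR_Sn_m (a : nat -> R) n m : (n <= m)%nat -> sum_n_m a n m = a n + sum_n_m a (S n) m.
Proof. intros; rewrite sum_Sn_m; auto. Qed.
Lemma sR_n_Sm (a : nat -> R) n m : (n <= S m)%nat -> sum_n_m a n (S m) = sum_n_m a n m + a (S m).
Proof. intros; rewrite sum_n_Sm; auto. Qed.
Lemma sR_plus (u v : nat -> R) n m : sum_n_m (fun k => u k + v k) n m = sum_n_m u n m + sum_n_m v n m.
Proof. apply (sum_n_m_plus u v). Qed.
Lemma sR_mult (c : R) (u : nat -> R) n m : sum_n_m (fun k => c * u k) n m = c * sum_n_m u n m.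
Proof. apply (sum_n_m_mult_l c u). Qed.
Lemma sR_shift (a : nat -> R) N : sum_n_m a 0 (S N) = a 0%nat + sum_n_m (fun k => a (S k)) 0 N.
Proof. rewrite sR_Sn_m by lia. now rewrite sum_n_m_S. Qed.
Lemma sR_ext (a b : nat -> R) n m : (forall k, a k = b k) -> sum_n_m a n m = sum_n_m b n m.
Proof. intros H; apply sum_n_m_ext; auto. Qed.

Lemma sR_ext_loc (a b : nat -> R) n m : (forall k, (n <= k <= m)%nat -> a k = b k) -> sum_n_m a n m = sum_n_m b n m.
Proof. intros H; apply sum_n_m_ext_loc; auto. Qed.
Lemma sR_zero n m : sum_n_m (fun _ => 0) n m = 0.
Proof. apply (sum_n_m_const_zero (G:=R_AbelianMonoid)). Qed.

Lemma binom_pascal n i : binom n i + binom n (S i) = binom (S n) (S i).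
Proof.
  unfold binom. destruct (lt_eq_lt_dec i n) as [[H|H]|H].
  - rewrite (proj2 (Nat.leb_le i n)) by lia. rewrite (proj2 (Nat.leb_le (S i) n)) by lia.
    rewrite (proj2 (Nat.leb_le (S i) (S n))) by lia. now apply pascal.
  - subst. rewrite Nat.leb_refl. rewrite (proj2 (Nat.leb_gt (S n) n)) by lia.
    rewrite Nat.leb_refl. rewrite !C_n_n. ring.
  - rewrite (proj2 (Nat.leb_gt i n)) by lia. rewrite (proj2 (Nat.leb_gt (S i) n)) by lia.
    rewrite (proj2 (Nat.leb_gt (S i) (S n))) by lia. ring.
Qed.

Definition bb m k := binom (2*m) (m+k).
Definition DD m k := (-1)^k * bb m k.

Lemma bb_zero m k : (m < k)%nat -> bb m k = 0.
Proof. intros; unfold bb, binom. rewrite (proj2 (Nat.leb_gt _ _)) by lia. auto. Qed.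
Lemma DD_zero m k : (m < k)%nat -> DD m k = 0.
Proof. intros; unfold DD; rewrite bb_zero; auto; ring. Qed.

Lemma bb_S m k : bb (S m) (S k) = bb m k + 2 * bb m (S k) + bb m (S (S k)).
Proof.
  unfold bb. replace (2 * S m)%nat with (S (S (2*m))) by lia.
  replace (S m + S k)%nat with (S (S (m+k))) by lia.
  rewrite <- !binom_pascal. replace (m + S k)%nat with (S (m+k)) by lia.
  replace (m + S (S k))%nat with (S (S (m+k))) by lia. ring.
Qed.
Lemma bb_S0 m : bb (S m) 0 = 2 * bb m 0 + 2 * bb m 1.
Proof.
  unfold bb. replace (2 * S m)%nat with (S (S (2*m))) by lia.
  replace (S m + 0)%nat with (S m) by lia. rewrite <- binom_pascal.
  assert (binom (S (2*m)) m = binom (S (2*m)) (S m)).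
  { unfold binom. rewrite !(proj2 (Nat.leb_le _ _)) by lia.
    rewrite pascal_step1 by lia. f_equal; lia. }
  rewrite H, <- binom_pascal. replace (m+0)%nat with m by lia. replace (m+1)%nat with (S m) by lia. ring.
Qed.
Lemma DD_S m k : DD (S m) (S k) = - DD m k + 2 * DD m (S k) - DD m (S (S k)).
Proof. unfold DD. rewrite bb_S. simpl. ring. Qed.
Lemma DD_S0 m : DD (S m) 0 = 2 * DD m 0 - 2 * DD m 1.
Proof. unfold DD. rewrite bb_S0. simpl. ring. Qed.

Definition cc (k : nat) (x : R) := cos (2 * INR k * x).

Lemma prod_cc k x : 2 * cc 1 x * cc (S k) x = cc (S (S k)) x + cc k x.
Proof.
  unfold cc. replace (INR 1) with 1 by reflexivity.
  replace (2 * INR (S (S k)) * x) with (2 * INR (S k) * x + 2 * 1 * x) by (rewrite !S_INR; ring).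
  replace (2 * INR k * x) with (2 * INR (S k) * x - 2 * 1 * x) by (rewrite !S_INR; ring).
  rewrite cos_plus, cos_minus. ring.
Qed.
Lemma cc0 x : cc 0 x = 1.
Proof. unfold cc. simpl. rewrite Rmult_0_r, Rmult_0_l, cos_0. auto. Qed.
Lemma prod_cc0 x : 2 * cc 1 x * cc 0 x = 2 * cc 1 x.
Proof. unfold cc. simpl. rewrite Rmult_0_r, Rmult_0_l, cos_0. ring. Qed.

Lemma expansion m : forall N x, (m <= N)%nat ->
  4 ^ m * sin x ^ (2 * m) = 2 * sum_n_m (fun k => DD m k * cc k x) 0 N - DD m 0.
Proof.
  induction m as [|m IH]; intros N x HN.
  - simpl. rewrite sR_Sn_m by lia.
    rewrite (sR_ext_loc _ (fun _ => 0)).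
    2:{ intros k Hk. rewrite DD_zero by lia. ring. }
    rewrite sR_zero. unfold DD, bb, binom, cc. simpl. rewrite Rmult_0_r, Rmult_0_l, cos_0.
    rewrite C_n_0. ring.
  - destruct N as [|N']; [lia|].
    set (N := S N').
    assert (IHN := IH N x ltac:(lia)).
    set (F := sum_n_m (fun k => DD m k * cc k x) 0 N) in IHN.
    set (A := sum_n_m (fun k => DD m k * cc (S k) x) 0 N').
    set (C := sum_n_m (fun k => DD m (S (S k)) * cc (S k) x) 0 N').
    set (E := sum_n_m (fun k => DD m (S k) * cc k x) 0 N').
    assert (F1 : @eq R F (DD m 0 + sum_n_m (fun k => DD m (S k) * cc (S k) x) 0 N')).
    { unfold F, N. rewrite sR_shift. unfold cc at 1. simpl. rewrite Rmult_0_r, Rmult_0_l, cos_0. ring. }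
    assert (F2 : 2 * cc 1 x * F = A + DD m 0 * cc 1 x + E).
    { unfold F, N. rewrite <- sR_mult. rewrite sR_shift.
      rewrite (sR_ext _ (fun k => DD m (S k) * cc (S (S k)) x + DD m (S k) * cc k x)).
      2:{ intros k. rewrite <- Rmult_plus_distr_l, <- prod_cc. ring. }
      rewrite sR_plus.
      assert (HA : @eq R A (DD m 0 * cc 1 x + sum_n_m (fun k => DD m (S k) * cc (S (S k)) x) 0 N')).
      { unfold A. destruct N' as [|N''].
        - rewrite sum_n_n. rewrite sum_n_n. rewrite (DD_zero m 1) by lia. ring.
        - rewrite sR_shift. rewrite sR_n_Sm by lia.
          rewrite (DD_zero m (S (S N''))) by lia. ring. }
      rewrite HA. unfold E. rewrite !cc0. ring. }
    assert (F5 : @eq R E (DD m 1 + C)).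
    { unfold E, C. destruct N' as [|N''].
      - rewrite !sum_n_n. rewrite (DD_zero m 2) by lia. rewrite cc0. ring.
      - rewrite sR_shift. rewrite sR_n_Sm by lia. rewrite (DD_zero m (S (S (S N'')))) by lia. rewrite cc0. ring. }
    assert (F6 : @eq R (sum_n_m (fun k => DD (S m) k * cc k x) 0 N)
                 (DD (S m) 0 + (- A + 2 * (F - DD m 0) - C))).
    { unfold N. rewrite sR_shift. unfold cc at 1. simpl (INR 0). rewrite Rmult_0_r, Rmult_0_l, cos_0.
      rewrite (sR_ext _ (fun k => (-1) * (DD m k * cc (S k) x) + (2 * (DD m (S k) * cc (S k) x)
                                  + (-1) * (DD m (S (S k)) * cc (S k) x)))).
      2:{ intros k. rewrite DD_S. ring. }
      rewrite !sR_plus, !sR_mult. fold A C. rewrite F1. ring. }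
    fold N. rewrite F6.
    replace (4 ^ S m * sin x ^ (2 * S m)) with ((4 * sin x ^ 2) * (4 ^ m * sin x ^ (2 * m))).
    2:{ replace (2 * S m)%nat with (2 + 2 * m)%nat by lia. rewrite pow_add. simpl. ring. }
    rewrite IHN.
    replace (4 * sin x ^ 2) with (2 - 2 * cc 1 x).
    2:{ unfold cc. simpl (INR 1). rewrite Rmult_1_r, cos_2a_sin. ring. }
    rewrite DD_S0.
    replace ((2 - 2 * cc 1 x) * (2 * F - DD m 0)) with (4 * F - 2 * DD m 0 - 2 * (2 * cc 1 x * F) + 2 * DD m 0 * cc 1 x) by ring.
    rewrite F2, F5. ring.
Qed.

Lemma is_RInt_lin (f g h : R -> R) u v al be :
  is_RInt f 0 PI u -> is_RInt g 0 PI v -> (forall x, h x = al * f x + be * g x) ->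
  is_RInt h 0 PI (al * u + be * v).
Proof.
  intros Hf Hg Hh.
  pose proof (is_RInt_plus (V:=R_NormedModule) _ _ _ _ _ _ (is_RInt_scal _ _ _ al _ Hf) (is_RInt_scal _ _ _ be _ Hg)) as H.
  apply (is_RInt_ext (V:=R_NormedModule) _ _ _ _ _ (fun x _ => eq_sym (Hh x)) H).
Qed.

Lemma ftc (f df : R -> R) :
  (forall x, is_derive f x (df x)) -> (forall x, ex_derive df x) ->
  is_RInt df 0 PI (f PI - f 0).
Proof.
  intros H1 H2. apply (is_RInt_derive (V:=R_CompleteNormedModule) f df 0 PI).
  - intros; auto.
  - intros x _. apply (ex_derive_continuous (K:=R_AbsRing) (V:=R_NormedModule)). auto.
Qed.

Fixpoint CS (a : R) (n : nat) : R * R :=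
  match n with
  | O => (0, 0)
  | S p => (- INR (S p) / a * snd (CS a p), - PI ^ (S p) / a + INR (S p) / a * fst (CS a p))
  end.

Lemma sin_aPI k : sin (2 * INR k * PI) = 0.
Proof. rewrite <- (Rplus_0_l (2 * INR k * PI)), sin_period. apply sin_0. Qed.
Lemma cos_aPI k : cos (2 * INR k * PI) = 1.
Proof. rewrite <- (Rplus_0_l (2 * INR k * PI)), cos_period. apply cos_0. Qed.

Lemma CS_int k n : (1 <= k)%nat ->
  is_RInt (fun x => x ^ n * cos (2 * INR k * x)) 0 PI (fst (CS (2 * INR k) n)) /\
  is_RInt (fun x => x ^ n * sin (2 * INR k * x)) 0 PI (snd (CS (2 * INR k) n)).
Proof.
  intros Hk. set (a := 2 * INR k).
  assert (Ha : a <> 0). { unfold a. apply Rmult_integral_contrapositive. split; [lra|].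
    apply not_0_INR; lia. }
  assert (sa : sin (a * PI) = 0) by (unfold a; apply sin_aPI).
  assert (ca : cos (a * PI) = 1) by (unfold a; apply cos_aPI).
  induction n as [|p [IHc IHs]].
  - split; simpl.
    + assert (H := ftc (fun x => sin (a * x) / a) (fun x => 1 * cos (a * x))).
      cbv beta in H. rewrite sa in H. rewrite Rmult_0_r, sin_0 in H.
      replace (0 / a - 0 / a) with 0 in H by (field; auto).
      apply H.
      * intros x. auto_derive; auto. field; auto.
      * intros x. auto_derive; auto.
    + assert (H := ftc (fun x => - cos (a * x) / a) (fun x => 1 * sin (a * x))).
      cbv beta in H. rewrite ca in H. rewrite Rmult_0_r, cos_0 in H.
      unfold Rminus in H. rewrite Rplus_opp_r in H.
      apply H.
      * intros x. auto_derive; auto. field; auto.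
      * intros x. auto_derive; auto.
  - split; [change (fst (CS a (S p))) with (- INR (S p) / a * snd (CS a p)) | change (snd (CS a (S p))) with (- PI ^ S p / a + INR (S p) / a * fst (CS a p))].
    + assert (H := ftc (fun x => x ^ S p * sin (a * x))
                       (fun x => INR (S p) * x ^ p * sin (a * x) + x ^ S p * (a * cos (a * x)))).
      cbv beta in H. rewrite sa in H.  
      replace (PI ^ S p * 0 - 0 ^ S p * sin (a * 0)) with 0 in H by (rewrite !Rmult_0_r, sin_0; ring).
      assert (H' : is_RInt (fun x => INR (S p) * x ^ p * sin (a * x) + x ^ S p * (a * cos (a * x))) 0 PI 0).
      { apply H.
        * intros x. auto_derive; auto. rewrite S_INR. destruct p; simpl; ring.
        * intros x. auto_derive; auto. }
      replace (- INR (S p) / a * snd (CS a p)) with (/a * 0 + (- INR (S p) / a) * snd (CS a p)) by (field; auto).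
      apply (is_RInt_lin _ _ _ _ _ _ _ H' IHs).
      intros x. field. auto.
    + assert (H := ftc (fun x => - x ^ S p * cos (a * x))
                       (fun x => - (INR (S p) * x ^ p * cos (a * x)) + x ^ S p * (a * sin (a * x)))).
      cbv beta in H. rewrite ca in H. rewrite Rmult_0_r, cos_0 in H.
      replace (- PI ^ S p * 1 - - 0 ^ S p * 1) with (- PI ^ S p) in H by (rewrite pow_i by lia; ring).
      assert (H' : is_RInt (fun x => - (INR (S p) * x ^ p * cos (a * x)) + x ^ S p * (a * sin (a * x))) 0 PI (- PI ^ S p)).
      { apply H.
        * intros x. auto_derive; auto. rewrite S_INR. destruct p; simpl; ring.
        * intros x. auto_derive; auto. }
      replace (- PI ^ S p / a + INR (S p) / a * fst (CS a p)) with (/a * (- PI ^ S p) + (INR (S p) / a) * fst (CS a p)) by (field; auto).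
      apply (is_RInt_lin _ _ _ _ _ _ _ H' IHc).
      intros x. field. auto.
Qed.

Lemma sR_empty (a : nat -> R) n m : (m < n)%nat -> sum_n_m a n m = 0.
Proof. intros; apply (sum_n_m_zero (G:=R_AbelianMonoid)); auto. Qed.

Lemma factS n : INR (fact (S n)) = INR (S n) * INR (fact n).
Proof. rewrite <- mult_INR. reflexivity. Qed.

Definition gj (a : R) (n j : nat) := (-1) ^ j * PI ^ (n + 1 - 2 * j) / (INR (fact (n + 1 - 2 * j)) * a ^ (2 * j)).

Lemma CS_closed a n : a <> 0 ->
  fst (CS a n) = - INR (fact n) * sum_n_m (gj a n) 1 (Nat.div2 n).
Proof.
  intros Ha.
  enough (H : fst (CS a n) = - INR (fact n) * sum_n_m (gj a n) 1 (Nat.div2 n) /\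
              fst (CS a (S n)) = - INR (fact (S n)) * sum_n_m (gj a (S n)) 1 (Nat.div2 (S n))) by exact (proj1 H).
  induction n as [|n [IH1 IH2]].
  - split; cbn [CS fst snd Nat.div2]; [replace (sum_n_m (gj a 0) 1 0) with 0 by (symmetry; apply sR_empty; lia) | replace (sum_n_m (gj a 1) 1 0) with 0 by (symmetry; apply sR_empty; lia)]; unfold Rdiv; ring.
  - split; [exact IH2|].
    change (fst (CS a (S (S n)))) with (- INR (S (S n)) / a * (- PI ^ (S n) / a + INR (S n) / a * fst (CS a n))).
    change (Nat.div2 (S (S n))) with (S (Nat.div2 n)).
    rewrite IH1. rewrite (sR_Sn_m (gj a (S (S n))) 1 (S (Nat.div2 n))) by (apply le_n_S, le_0_n). rewrite <- sum_n_m_S.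
    rewrite (sR_ext (fun j => gj a (S (S n)) (S j)) (fun j => (- / a ^ 2) * gj a n j)).
    2:{ intros j. unfold gj. replace (S (S n) + 1 - 2 * S j)%nat with (n + 1 - 2 * j)%nat by lia.
        replace (2 * S j)%nat with (2 + 2 * j)%nat by lia. rewrite pow_add. simpl pow at 1. field.
        repeat split; try apply INR_fact_neq_0; try apply pow_nonzero; auto. }
    rewrite sR_mult.
    assert (G1 : gj a (S (S n)) 1 = - PI ^ (S n) / (INR (fact (S n)) * a ^ 2)).
    { unfold gj. replace (S (S n) + 1 - 2 * 1)%nat with (S n) by lia. simpl ((-1) ^ 1). change (2 * 1)%nat with 2%nat. field.
      repeat split; try apply INR_fact_neq_0; try apply pow_nonzero; auto. }
    rewrite G1. set (SS := sum_n_m (gj a n) 1 (Nat.div2 n)).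
    rewrite !factS. field. repeat split; try apply INR_fact_neq_0; try (apply not_0_INR; lia); auto.
Qed.

Lemma I0_int n : is_RInt (fun x => x ^ n * cos (2 * INR 0 * x)) 0 PI (PI ^ (n + 1) / INR (n + 1)).
Proof.
  assert (Hn : INR (n + 1) <> 0) by (apply not_0_INR; lia).
  assert (H := ftc (fun x => x ^ (n + 1) / INR (n + 1)) (fun x => x ^ n * cos (2 * INR 0 * x))).
  cbv beta in H. rewrite pow_i in H by lia.
  replace (PI ^ (n + 1) / INR (n + 1) - 0 / INR (n + 1)) with (PI ^ (n + 1) / INR (n + 1)) in H by (field; auto).
  apply H.
  - intros x. auto_derive; auto. simpl INR. rewrite Rmult_0_r, Rmult_0_l, cos_0.
    replace (Init.Nat.pred (n + 1)) with n by lia. field. auto.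
  - intros x. auto_derive; auto.
Qed.


Lemma d2 n : (2 * Nat.div2 n <= n)%nat.
Proof.
  enough (H : (2 * Nat.div2 n <= n)%nat /\ (2 * Nat.div2 (S n) <= S n)%nat) by apply H.
  induction n as [|n [H1 H2]]; [simpl; lia|]. split; auto.
  change (Nat.div2 (S (S n))) with (S (Nat.div2 n)). lia.
Qed.

Lemma is_RInt_sum (g : nat -> R -> R) (v : nat -> R) N :
  (forall k, is_RInt (g k) 0 PI (v k)) ->
  is_RInt (fun x => sum_n_m (fun k => g k x) 0 N) 0 PI (sum_n_m v 0 N).
Proof.
  intros H. induction N as [|N IH].
  - apply (is_RInt_ext (V:=R_NormedModule) (g 0%nat)).
    + intros x _. rewrite sum_n_n. reflexivity.
    + rewrite sum_n_n. apply H.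
  - rewrite sR_n_Sm by lia.
    replace (sum_n_m v 0 N + v (S N)) with (1 * sum_n_m v 0 N + 1 * v (S N)) by ring.
    apply (is_RInt_lin _ _ _ _ _ _ _ IH (H (S N))).
    intros x. rewrite sR_n_Sm by lia. ring.
Qed.

Lemma sum_exch (f : nat -> nat -> R) a b N :
  sum_n_m (fun k => sum_n_m (fun j => f j k) a b) 0 N =
  sum_n_m (fun j => sum_n_m (fun k => f j k) 0 N) a b.
Proof.
  induction N as [|N IH].
  - rewrite sum_n_n. apply sR_ext. intros j. rewrite sum_n_n. reflexivity.
  - rewrite sR_n_Sm by lia. rewrite IH.
    rewrite (sR_ext (fun j => sum_n_m (fun k => f j k) 0 (S N))
                    (fun j => sum_n_m (fun k => f j k) 0 N + f j (S N))).
    + rewrite sR_plus. reflexivity.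
    + intros j. rewrite sR_n_Sm by lia. reflexivity.
Qed.

Lemma series_fin (f : nat -> R) M : (forall k, (M < k)%nat -> f k = 0) ->
  Series f = sum_n_m f 0 M.
Proof.
  intros Hf. apply is_series_unique.
  assert (H : is_lim_seq (sum_n f) (sum_n_m f 0 M)).
  2:{ unfold is_lim_seq in H. exact H. }
  apply (is_lim_seq_ext_loc (fun _ => sum_n_m f 0 M)); [|apply is_lim_seq_const].
  exists M. intros p Hp. unfold sum_n.
  rewrite (sum_n_m_Chasles f 0 M p) by lia.
  rewrite (sR_ext_loc f (fun _ => 0) (S M) p).
  - rewrite sR_zero. symmetry. apply (Rplus_0_r (sum_n_m f 0 M)).
  - intros k Hk. apply Hf. lia.
Qed.

Definition Iv n k := match k with O => PI ^ (n + 1) / INR (n + 1) | S _ => fst (CS (2 * INR k) n) end.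

Lemma Iv_int n k : is_RInt (fun x => x ^ n * cc k x) 0 PI (Iv n k).
Proof.
  destruct k as [|k].
  - apply I0_int.
  - apply (CS_int (S k) n). lia.
Qed.

Definition alpha n j := (-1) ^ j / ((2 * PI) ^ (2 * j - 1) * INR (fact (n + 1 - 2 * j))).

Lemma gj_conv n k j : (1 <= j)%nat -> (2 * j <= n)%nat ->
  2 * gj (2 * INR (S k)) n j = PI ^ n * alpha n j / INR (S k) ^ (2 * j).
Proof.
  intros H1 H2. unfold gj, alpha.
  assert (Hs : INR (S k) <> 0) by (apply not_0_INR; lia).
  set (s := INR (S k)) in *.
  set (r := (n + 1 - 2 * j)%nat). set (e := (2 * j - 1)%nat).
  replace (2 * j)%nat with (S e) by (unfold e; lia).
  assert (Hn : PI ^ n = PI ^ r * PI ^ e) by (rewrite <- pow_add; f_equal; unfold r, e; lia).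
  rewrite Hn. rewrite !Rpow_mult_distr. rewrite <- !tech_pow_Rmult.
  field. repeat split; try apply INR_fact_neq_0; try apply pow_nonzero; auto; try lra; apply PI_neq0.
Qed.

Theorem theorem1 (n m : nat) :
  RInt (fun x => x ^ n * (sin x) ^ (2 * m)) 0 PI =
  PI ^ n / 4 ^ m *
  (PI * binom (2 * m) m / INR (n + 1)
   - INR (fact n) *
     sum_n_m
       (fun j : nat =>
          (-1) ^ j / ((2 * PI) ^ (2 * j - 1) * INR (fact (n + 1 - 2 * j))) *
          Series (fun k : nat =>
                    (-1) ^ (k + 1) / (INR (k + 1)) ^ (2 * j)
                    * binom (2 * m) (m + (k + 1))))
       1 (Nat.div2 n)).
Proof.
  set (d := Nat.div2 n).
  set (T := fun j => sum_n_m (fun k => DD m (S k) / INR (S k) ^ (2 * j)) 0 m).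
  rewrite (sR_ext_loc _ (fun j => alpha n j * T j) 1 d).
  2:{ intros j Hj. unfold alpha, T. f_equal.
      rewrite (series_fin _ m).
      - apply sR_ext. intros k. rewrite Nat.add_1_r. unfold DD, bb. unfold Rdiv. ring.
      - intros k Hk. unfold binom. rewrite (proj2 (Nat.leb_gt _ _)) by lia. ring. }
  assert (H4 : 4 ^ m <> 0) by (apply pow_nonzero; lra).
  assert (Hsum := is_RInt_sum (fun k x => DD m k * (x ^ n * cc k x)) (fun k => DD m k * Iv n k) (S m)).
  assert (Hsum' : is_RInt (fun x => sum_n_m (fun k => DD m k * (x ^ n * cc k x)) 0 (S m)) 0 PI
                    (sum_n_m (fun k => DD m k * Iv n k) 0 (S m))).
  { apply Hsum. intros k.
    replace (DD m k * Iv n k) with (DD m k * Iv n k + 0 * Iv n k) by ring.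
    apply (is_RInt_lin _ _ _ _ _ _ _ (Iv_int n k) (Iv_int n k)). intros x. ring. }
  assert (HPt : forall x, x ^ n * sin x ^ (2 * m) =
     / 4 ^ m * 2 * sum_n_m (fun k => DD m k * (x ^ n * cc k x)) 0 (S m) + (- / 4 ^ m * DD m 0) * (x ^ n * cc 0 x)).
  { intros x. rewrite (sR_ext _ (fun k => x ^ n * (DD m k * cc k x))) by (intros; ring).
    rewrite sR_mult. rewrite cc0.
    assert (E := expansion m (S m) x ltac:(lia)).
    replace (x ^ n * sin x ^ (2 * m)) with (x ^ n * / 4 ^ m * (4 ^ m * sin x ^ (2 * m))) by (field; auto).
    rewrite E. field. auto. }
  pose proof (is_RInt_lin _ _ _ _ _ _ _ Hsum' (Iv_int n 0) HPt) as HV.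
  rewrite (is_RInt_unique _ _ _ _ HV).
  rewrite sR_shift.
  assert (K : sum_n_m (fun k => DD m (S k) * Iv n (S k)) 0 m =
              - INR (fact n) * PI ^ n / 2 * sum_n_m (fun j => alpha n j * T j) 1 d).
  { rewrite (sR_ext _ (fun k => (- INR (fact n) * PI ^ n / 2) *
                         sum_n_m (fun j => alpha n j * (DD m (S k) / INR (S k) ^ (2 * j))) 1 d)).
    - rewrite sR_mult. f_equal. rewrite sum_exch. apply sR_ext. intros j. unfold T.
      rewrite <- sR_mult. apply sR_ext. intros k. reflexivity.
    - intros k. change (Iv n (S k)) with (fst (CS (2 * INR (S k)) n)).
      rewrite CS_closed.
      2:{ apply Rmult_integral_contrapositive. split; [lra|]. apply not_0_INR; lia. }
      rewrite (sR_ext_loc _ (fun j => (PI ^ n / 2) * (alpha n j / INR (S k) ^ (2 * j))) 1 d).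
      + rewrite sR_mult.
        rewrite (sR_ext (fun j => alpha n j * (DD m (S k) / INR (S k) ^ (2 * j)))
                        (fun j => DD m (S k) * (alpha n j / INR (S k) ^ (2 * j)))) by (intros; unfold Rdiv; ring).
        rewrite sR_mult. field.
      + intros j Hj. assert (Hd := d2 n). fold d in Hd.
        assert (G := gj_conv n k j ltac:(lia) ltac:(lia)).
        replace (gj (2 * INR (S k)) n j) with (PI ^ n * alpha n j / INR (S k) ^ (2 * j) / 2) by (rewrite <- G; field).
        field. apply pow_nonzero. apply not_0_INR; lia. }
  rewrite K. unfold Iv. unfold DD, bb. rewrite Nat.add_0_r. rewrite pow_add.
  set (Z := sum_n_m (fun j => alpha n j * T j) 1 d).
  match goal with |- ?a = ?b => change (@eq R a b) end. simpl pow. field. split; auto. apply not_0_INR; lia.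
Qed.
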